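(* Every private information distinguishing debate game $(A,S,P,C_w,C_l)$ has a policy with error at most $$\mathbb E_{s\sim P}\left[\begin{cases}\frac{|C_l(s)|}{|C_w(s)|+|C_l(s)|} & C_w(s)\cup C_l(s)\neq\emptyset\\ \frac12 & C_w(s)\cup C_l(s)=\emptyset\end{cases}\right].$$
   Context: Let $\delta$ be a special default action. A PIDDG is a tuple $(A,S,P,C_w,C_l)$ with $A$ finite, $\delta\notin A$, $S$ finite, $P$ a probability mass function on $S$, and $C_w,C_l:S\to\mathcal P(A)$. A policy is $M:\{1,2\}\times(A\cup\{\delta\})^2\to[0,1]$ with $M(1,a_1,a_2)+M(2,a_1,a_2)=1$. $G_1(B,M)$ is the following Bayesian game with agents $1,2$. Each agent has action set $A\cup\{\delta\}$ and type set $\mathcal P(A)$. A scenario $s\sim P$ is drawn, and agent 1 gets type $C_w(s)$ while agent 2 gets type $C_l(s)$. Payoffs are as follows: - if both agents play available actions ($a_i\in t_i\cup\{\delta\}$), agent $i$ gets $M(i,a_1,a_2)$; - if exactly one plays an unavailable action, it gets $0$ and the other gets $1$; - if both play unavailable actions, each gets $1/2$. $G_2(B,M)$ is the same with types swapped (agent 1 gets $C_l(s)$, agent 2 gets $C_w(s)$). The error is $\frac{v_1(G_2(B,M))+v_2(G_1(B,M))}{2}$, where $v_i$ is the value of the zero-sum Bayesian game to agent $i$. *)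

(* Defs.v *)
From HB Require Import structures.
From mathcomp Require Import all_boot all_order all_algebra.
From mathcomp Require Import all_classical all_reals.
Set Implicit Arguments. Unset Strict Implicit. Unset Printing Implicit Defensive.
Import Order.TTheory GRing.Theory Num.Theory.
Local Open Scope ring_scope.

(* Actions: [option A], where [None] is the default action delta (so delta \notin A).
   Agents 1,2 are the ordinals 0,1 of 'I_2. Types are subsets of A. *)

Section PIDDG.
Variables (R : realType) (A S : finType).

Definition is_policy (M : 'I_2 -> option A -> option A -> R) : Prop :=
  (forall i a1 a2, 0 <= M i a1 a2 <= 1) /\
  (forall a1 a2, M ord0 a1 a2 + M ord_max a1 a2 = 1).

Definition available (t : {set A}) (a : option A) : bool :=
  if a is Some x then x \in t else true.

Definition payoff (M : 'I_2 -> option A -> option A -> R) (i : 'I_2)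
  (t1 t2 : {set A}) (a1 a2 : option A) : R :=
  match available t1 a1, available t2 a2 with
  | true, true => M i a1 a2
  | true, false => if i == ord0 then 1 else 0
  | false, true => if i == ord0 then 0 else 1
  | false, false => 1 / 2
  end.

Definition is_strategy (sigma : {set A} -> option A -> R) : Prop :=
  (forall t a, 0 <= sigma t a) /\ (forall t, \sum_(a : option A) sigma t a = 1).

Definition exp_payoff (P : S -> R) (T1 T2 : S -> {set A})
  (M : 'I_2 -> option A -> option A -> R) (i : 'I_2)
  (sigma1 sigma2 : {set A} -> option A -> R) : R :=
  \sum_(s : S) P s * \sum_(a1 : option A) \sum_(a2 : option A)
     sigma1 (T1 s) a1 * sigma2 (T2 s) a2 * payoff M i (T1 s) (T2 s) a1 a2.

Definition value1 P T1 T2 M : R :=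
  sup [set x | exists2 s1, is_strategy s1 &
        x = inf [set y | exists2 s2, is_strategy s2 & y = exp_payoff P T1 T2 M ord0 s1 s2]].

Definition value2 P T1 T2 M : R :=
  sup [set x | exists2 s2, is_strategy s2 &
        x = inf [set y | exists2 s1, is_strategy s1 & y = exp_payoff P T1 T2 M ord_max s1 s2]].

(* G_1(B,M): agent 1 gets C_w(s), agent 2 gets C_l(s); G_2 swapped. *)
Definition error (P : S -> R) (Cw Cl : S -> {set A}) M : R :=
  (value1 P Cl Cw M + value2 P Cw Cl M) / 2.

Definition error_bound (P : S -> R) (Cw Cl : S -> {set A}) : R :=
  \sum_(s : S) P s *
    (if Cw s :|: Cl s != finset.set0
     then #|Cl s|%:R / (#|Cw s| + #|Cl s|)%:R
     else 1 / 2).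

End PIDDG.

(* Main.v *)
Require Import Defs.
From HB Require Import structures.
From mathcomp Require Import all_boot all_order all_algebra.
From mathcomp Require Import all_classical all_reals.
From mathcomp Require Import ring lra.
Import Order.TTheory GRing.Theory Num.Theory.
Set Implicit Arguments. Unset Strict Implicit. Unset Printing Implicit Defensive.
Local Open Scope ring_scope.
Fixpoint first_in {X : finType} (s : seq X) (U Z : {set X}) : bool :=
  if s is x :: s' then (if x \in Z then x \in U else first_in s' U Z) else false.

Lemma firstP (X : finType) (s : seq X) (U V : {set X}) u :
  u \in U -> u \in s -> (forall v, v \in V -> (index u s < index v s)%N) ->
  first_in s U (U :|: V).
Proof.
move=> uU; elim: s => [|x s IH] //=.
rewrite inE finset.in_setU => /orP[/eqP ux|us] H.
  by rewrite -ux uU.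
case xU: (x \in U) => //=.
case xV: (x \in V) => /=.
  by have := H x xV; rewrite /= eqxx.
apply: IH => // v vV.
have := H v vV; rewrite /=.
have -> : (x == u) = false by apply/negbTE; apply: contraFN xU => /eqP ->.
have -> : (x == v) = false by apply/negbTE; apply: contraFN xV => /eqP ->.
by [].
Qed.

Section Comb.
Variables (R : realFieldType) (X I : finType) (U Z : I -> {set X}).
Hypothesis HUZ : forall i, U i \subset Z i.

Definition Fv (Y : {set X}) (p : I -> R) :=
  \sum_i p i * (#|U i :&: Y|%:R / #|Z i :&: Y|%:R).

Lemma sum_split_Y (Y : {set X}) i :
  \sum_(x in Y) (if x \in Z i then (x \in U i)%:R
                 else #|U i :&: (Y :\ x)|%:R / #|Z i :&: (Y :\ x)|%:R : R)
  = #|Y|%:R * (#|U i :&: Y|%:R / #|Z i :&: Y|%:R).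
Proof.
set u := #|U i :&: Y|; set z := #|Z i :&: Y|.
rewrite (bigID (fun x => x \in Z i)) /=.
have E1 : \sum_(x in Y | x \in Z i) ((x \in U i)%:R : R) = u%:R.
  have -> : (u%:R : R) = \sum_(x in U i :&: Y) 1 by rewrite sumr_const.
  rewrite big_mkcond [RHS]big_mkcond /=.
  apply: eq_bigr => x _; rewrite !inE.
  case xU: (x \in U i); case xZ: (x \in Z i); case: (x \in Y) => //=.
  by move: (fintype.subsetP (HUZ i) x); rewrite xU xZ => /(_ isT).
have E2 : \sum_(x in Y | x \notin Z i)
     (#|U i :&: (Y :\ x)|%:R / #|Z i :&: (Y :\ x)|%:R : R)
   = \sum_(x in Y | x \notin Z i) (u%:R / z%:R).
  apply: eq_bigr => x /andP[_ xZ].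
  have xU : x \notin U i.
    by apply: contra xZ; apply: (fintype.subsetP (HUZ i)).
  have -> : U i :&: (Y :\ x) = U i :&: Y.
    apply/setP => y; rewrite !inE; case: (eqVneq y x) => [->|] //=.
    by rewrite (negbTE xU).
  have -> : Z i :&: (Y :\ x) = Z i :&: Y.
    apply/setP => y; rewrite !inE; case: (eqVneq y x) => [->|] //=.
    by rewrite (negbTE xZ).
  by [].
have E1' : \sum_(x in Y | x \in Z i) (if x \in Z i then (x \in U i)%:R
                 else #|U i :&: (Y :\ x)|%:R / #|Z i :&: (Y :\ x)|%:R : R)
   = u%:R.
  by rewrite -E1; apply: eq_bigr => x /andP[_ ->].
have E2' : \sum_(x in Y | x \notin Z i) (if x \in Z i then (x \in U i)%:R
                 else #|U i :&: (Y :\ x)|%:R / #|Z i :&: (Y :\ x)|%:R : R)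
   = \sum_(x in Y | x \notin Z i) (u%:R / z%:R).
  by rewrite -E2; apply: eq_bigr => x /andP[_ /negbTE ->].
rewrite E1' E2' sumr_const.
have -> : #|[pred x in Y | x \notin Z i]| = #|Y :\: Z i|.
  by apply: eq_card => x; rewrite !inE andbC.
have HY : #|Y| = (z + #|Y :\: Z i|)%N.
  by rewrite /z finset.setIC cardsID.
rewrite HY natrD.
have [z0|zn0] := eqVneq z 0%N.
  have u0 : u = 0%N.
    apply/eqP; rewrite -leqn0 -z0 /u /z; apply: subset_leq_card.
    by apply: finset.setSI.
  by rewrite u0 z0 !mul0r mul0rn mulr0 add0r.
rewrite -mulr_natr.
have zR : (z%:R : R) != 0 by rewrite pnatr_eq0.
by field.
Qed.

Lemma comb : forall n (Y : {set X}) (p : I -> R), #|Y| = n -> (forall i, 0 <= p i) ->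
  exists s : seq X, {subset Y <= s} /\
    \sum_i p i * (first_in s (U i) (Z i))%:R <= Fv Y p.
Proof.
elim => [|n IH] Y p cY p0.
  exists [::]; split.
    by move=> x; move/eqP: cY; rewrite cards_eq0 => /eqP ->; rewrite inE.
  rewrite big1 /=; last by move=> i _; rewrite mulr0.
  apply: sumr_ge0 => i _; apply: mulr_ge0 => //.
  by apply: divr_ge0.
pose g x := \sum_i p i * (if x \in Z i then (x \in U i)%:R
                 else #|U i :&: (Y :\ x)|%:R / #|Z i :&: (Y :\ x)|%:R : R).
have Hsum : \sum_(x in Y) g x = #|Y|%:R * Fv Y p.
  rewrite /g exchange_big /Fv mulr_sumr; apply: eq_bigr => i _.
  by rewrite -mulr_sumr sum_split_Y mulrCA.
have /existsP[x /andP[xY gx]] : [exists x, (x \in Y) && (g x <= Fv Y p)].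
  case: (boolP [exists x, (x \in Y) && (g x <= Fv Y p)]) => // /existsPn H.
  exfalso.
  have : \sum_(x in Y) Fv Y p < \sum_(x in Y) g x.
    apply: ltr_sum.
      have : (0 < #|Y|)%N by rewrite cY.
      case/card_gt0P => y yY; apply/hasP; exists y => //.
    by move=> y yY; have := H y; rewrite yY /= -ltNge.
  by rewrite Hsum sumr_const mulr_natl ltxx.
have cY' : #|Y :\ x| = n by move: cY; rewrite (cardsD1 x) xY add1n => -[].
pose p' i := if x \in Z i then 0 else p i.
have p'0 : forall i, 0 <= p' i by move=> i; rewrite /p'; case: ifP.
have [s' [sub' H']] := IH (Y :\ x) p' cY' p'0.
exists (x :: s'); split.
  move=> y yY; rewrite inE; case: (eqVneq y x) => //= yx.
  by apply: sub'; rewrite !inE yx.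
apply: le_trans gx.
have -> : \sum_i p i * (first_in (x :: s') (U i) (Z i))%:R =
   \sum_i (if x \in Z i then p i * (x \in U i)%:R else 0) +
   \sum_i p' i * (first_in s' (U i) (Z i))%:R.
  rewrite -big_split; apply: eq_bigr => i _ /=; rewrite /p'.
  by case: (x \in Z i); rewrite ?mul0r ?addr0 ?add0r.
have -> : g x = \sum_i (if x \in Z i then p i * (x \in U i)%:R else 0) +
   Fv (Y :\ x) p'.
  rewrite /g /Fv -big_split; apply: eq_bigr => i _ /=; rewrite /p'.
  by case: (x \in Z i); rewrite ?mul0r ?addr0 ?add0r.
by rewrite lerD2l.
Qed.

End Comb.

Lemma supinf_le (R : realType) (T : Type) (St : T -> Prop) (f : T -> T -> R) (B : R) (t0 : T) :
  St t0 ->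
  (forall a b, St a -> St b -> 0 <= f a b) ->
  (forall a, St a -> exists2 b, St b & f a b <= B) ->
  sup [set x | exists2 a, St a & x = inf [set y | exists2 b, St b & y = f a b]] <= B.
Proof.
move=> St0 f0 H; apply: ge_sup.
  by exists (inf [set y | exists2 b, St b & y = f t0 b]); exists t0.
move=> x [a Sa ->].
have [b Sb fb] := H a Sa.
apply: le_trans fb; apply: ge_inf; last by exists b.
by exists 0 => y [b' Sb' ->]; apply: f0.
Qed.

Section G.
Variables (R : realType) (A S : finType).

Definition dstrat (g : {set A} -> option A) : {set A} -> option A -> R :=
  fun t a => (a == g t)%:R.

Lemma dstratP g : is_strategy (dstrat g).
Proof.
split=> [t a|t]; first by rewrite /dstrat ler0n.
by rewrite (bigD1 (g t)) //= /dstrat eqxx big1 ?addr0 // => a /negbTE ->.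
Qed.

Lemma sum_prod (s1 s2 : option A -> R) (c : R) :
  \sum_a1 s1 a1 = 1 -> \sum_a2 s2 a2 = 1 ->
  \sum_a1 \sum_a2 s1 a1 * s2 a2 * c = c.
Proof.
move=> h1 h2.
rewrite (eq_bigr (fun a1 => s1 a1 * c)); last first.
  by move=> a1 _; rewrite -mulr_suml -mulr_sumr h2 mulr1.
by rewrite -mulr_suml h1 mul1r.
Qed.

Lemma exp_le2 (P : S -> R) (P0 : forall s, 0 <= P s) T1 T2 M i s1 g (c : S -> R) :
  is_strategy s1 ->
  (forall s a1, payoff M i (T1 s) (T2 s) a1 (g (T2 s)) <= c s) ->
  exp_payoff P T1 T2 M i s1 (dstrat g) <= \sum_s P s * c s.
Proof.
move=> [s10 s11] H; apply: ler_sum => s _; apply: ler_wpM2l => //.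
rewrite -(@sum_prod _ _ (c s) (s11 (T1 s)) (proj2 (dstratP g) (T2 s))).
apply: ler_sum => a1 _; apply: ler_sum => a2 _.
rewrite /dstrat; case: eqP => [->|_]; last by rewrite ?mulr0 ?mul0r.
by rewrite mulr1; apply: ler_wpM2l.
Qed.

Lemma exp_le1 (P : S -> R) (P0 : forall s, 0 <= P s) T1 T2 M i s2 g (c : S -> R) :
  is_strategy s2 ->
  (forall s a2, payoff M i (T1 s) (T2 s) (g (T1 s)) a2 <= c s) ->
  exp_payoff P T1 T2 M i (dstrat g) s2 <= \sum_s P s * c s.
Proof.
move=> [s20 s21] H; apply: ler_sum => s _; apply: ler_wpM2l => //.
rewrite -(@sum_prod _ _ (c s) (proj2 (dstratP g) (T1 s)) (s21 (T2 s))).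
apply: ler_sum => a1 _; apply: ler_sum => a2 _.
rewrite /dstrat; case: eqP => [->|_]; last by rewrite ?mulr0 ?mul0r.
by rewrite mul1r; apply: ler_wpM2l.
Qed.

Lemma payoff_ge0 (M : 'I_2 -> option A -> option A -> R) i (t1 t2 : {set A}) a1 a2 : is_policy M -> 0 <= payoff M i t1 t2 a1 a2.
Proof.
move=> [HM _]; rewrite /payoff.
case: (available t1 a1); case: (available t2 a2) => /=.
all: try by case/andP: (HM i a1 a2).
all: try by case: ifP.
lra.
Qed.

Lemma exp_ge0 (P : S -> R) (P0 : forall s, 0 <= P s) (T1 T2 : S -> {set A}) (M : 'I_2 -> option A -> option A -> R) i s1 s2 :
  is_policy M -> is_strategy s1 -> is_strategy s2 -> 0 <= exp_payoff P T1 T2 M i s1 s2.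
Proof.
move=> HM [h1 _] [h2 _]; apply: sumr_ge0 => s _; apply: mulr_ge0 => //.
apply: sumr_ge0 => a1 _; apply: sumr_ge0 => a2 _.
by apply: mulr_ge0; [apply: mulr_ge0|apply: payoff_ge0].
Qed.

End G.


Section Pol.
Variables (R : realType) (A : finType).

Fixpoint pickc (s : seq (A * bool)) (c : bool) (t : {set A}) : option A :=
  if s is x :: s' then (if (x.2 == c) && (x.1 \in t) then Some x.1 else pickc s' c t)
  else None.

Lemma pickc_some (s : seq (A * bool)) c t b : pickc s c t = Some b ->
  b \in t /\ forall b', b' \in t -> (index (b, c) s <= index (b', c) s)%N.
Proof.
elim: s => [|[x xc] s IH] //=.
case: ifP => [/andP[/eqP xcE xt] [<-]|hx /IH [bt Hb]].
  by split => // b' _; rewrite /= xcE eqxx.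
split => // b' b't.
case: eqP => [[xb xcc]|_]; first by move: hx; rewrite xb xcc eqxx bt.
case: eqP => [[xb xcc]|_]; first by move: hx; rewrite xb xcc eqxx b't.
by rewrite ltnS; apply: Hb.
Qed.

Lemma pickc_none (s : seq (A * bool)) c t : pickc s c t = None ->
  forall b, b \in t -> (b, c) \notin s.
Proof.
elim: s => [|[x xc] s IH] //= + b bt.
case: ifP => // hx /IH /(_ b bt) H.
rewrite inE negb_or H andbT; apply/eqP => -[xb xcc].
by move: hx; rewrite -xb -xcc eqxx bt.
Qed.

Definition M0 (sq : seq (A * bool)) (a1 a2 : option A) : R :=
  match a1, a2 with
  | Some a, Some b => if (index (a, true) sq < index (b, false) sq)%N then 1 else 0
  | Some _, None => 1
  | None, Some _ => 0
  | None, None => 1/2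
  end.

Definition pol sq : 'I_2 -> option A -> option A -> R :=
  fun i a1 a2 => if i == ord0 then M0 sq a1 a2 else 1 - M0 sq a1 a2.

Lemma M0_01 sq a1 a2 : 0 <= M0 sq a1 a2 <= 1.
Proof.
case: a1 => [a|]; case: a2 => [b|] /=; try case: ifP => _; apply/andP; split; lra.
Qed.

Lemma ordmax_neq : (ord_max == ord0 :> 'I_2) = false.
Proof. by []. Qed.

Lemma pol_policy sq : is_policy (pol sq).
Proof.
split.
  move=> i a1 a2; rewrite /pol; have /andP[h0 h1] := M0_01 sq a1 a2.
  by case: ifP => _; apply/andP; split; lra.
by move=> a1 a2; rewrite /pol eqxx ordmax_neq; lra.
Qed.

Lemma payoff_le1 (M : 'I_2 -> option A -> option A -> R) i (t1 t2 : {set A}) a1 a2 :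
  is_policy M -> payoff M i t1 t2 a1 a2 <= 1.
Proof.
move=> [HM _]; rewrite /payoff.
case: (available t1 a1); case: (available t2 a2) => /=.
all: try by case/andP: (HM i a1 a2).
all: try by case: ifP.
lra.
Qed.

Lemma index_neq (sq : seq (A * bool)) x y : x \in sq -> y \in sq -> x != y ->
  index x sq != index y sq.
Proof.
move=> xs ys; apply: contra => /eqP E.
by rewrite -(nth_index x xs) E nth_index.
Qed.

Variable sq : seq (A * bool).
Hypothesis allin : forall x, x \in sq.

Lemma G2bound (L W : {set A}) a1 :
  payoff (pol sq) ord0 L W a1 (pickc sq false W) <=
  (if (W == finset.set0) && (L == finset.set0) then 1/2 else
   (first_in sq [set x | (x.2 == true) && (x.1 \in L)]
     ([set x | (x.2 == true) && (x.1 \in L)] :|: [set x | (x.2 == ~~ true) && (x.1 \in W)]))%:R).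
Proof.
case hp: (pickc sq false W) => [b|].
  have [bW Hb] := pickc_some hp.
  have -> : (W == finset.set0) = false.
    by apply/negbTE/set0Pn; exists b.
  rewrite /= /payoff /= bW.
  case: a1 => [a|] /=; last by rewrite /pol /= ler0n.
  case aL: (a \in L); last by rewrite ler0n.
  rewrite /pol /=.
  case: ifP => hab; last by rewrite ler0n.
  rewrite (firstP (u := (a, true))) //.
    by rewrite inE /= aL.
  move=> [b' c']; rewrite inE /= => /andP[/eqP -> b'W].
  by apply: leq_trans hab (Hb b' b'W).
have W0 : W = finset.set0.
  apply/setP => b; rewrite inE; apply/negbTE/negP => bW.
  by have := pickc_none hp bW; rewrite allin.
rewrite W0 eqxx /=.
case: (eqVneq L finset.set0) => [L0|/set0Pn [a0 a0L]] /=.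
  rewrite L0 /payoff /pol /=; case: a1 => [a|] /=; rewrite ?inE /=; lra.
rewrite (firstP (u := (a0, true))) //.
- by apply: payoff_le1; apply: pol_policy.
- by rewrite inE /= a0L.
- by move=> [b' c']; rewrite inE /= inE andbF.
Qed.

Lemma G1bound (L W : {set A}) a2 :
  payoff (pol sq) ord_max W L (pickc sq true W) a2 <=
  (if (W == finset.set0) && (L == finset.set0) then 1/2 else
   (first_in sq [set x | (x.2 == false) && (x.1 \in L)]
     ([set x | (x.2 == false) && (x.1 \in L)] :|: [set x | (x.2 == ~~ false) && (x.1 \in W)]))%:R).
Proof.
case hp: (pickc sq true W) => [a|].
  have [aW Ha] := pickc_some hp.
  have -> : (W == finset.set0) = false.
    by apply/negbTE/set0Pn; exists a.
  rewrite /= /payoff /= aW.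
  case: a2 => [b|] /=; last by rewrite /pol /= subrr ler0n.
  case bL: (b \in L); last by rewrite ler0n.
  rewrite /pol /=.
  case: ifP => hab; first by rewrite subrr ler0n.
  rewrite (firstP (u := (b, false))) //.
  - by rewrite subr0.
  - by rewrite inE /= bL.
  move=> [a' c']; rewrite inE /= => /andP[/eqP -> a'W].
  have hne0 : (b, false) != (a, true) by rewrite xpair_eqE andbF.
  have hne := index_neq (allin (b, false)) (allin (a, true)) hne0.
  have h1 : (index (b, false) sq < index (a, true) sq)%N.
    by rewrite ltn_neqAle hne leqNgt hab.
  by apply: leq_trans h1 (Ha a' a'W).
have W0 : W = finset.set0.
  apply/setP => b; rewrite inE; apply/negbTE/negP => bW.
  by have := pickc_none hp bW; rewrite allin.
rewrite W0 eqxx /=.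
case: (eqVneq L finset.set0) => [L0|/set0Pn [a0 a0L]] /=.
  rewrite L0 /payoff /pol /=; case: a2 => [a|] /=; rewrite ?inE /=; lra.
rewrite (firstP (u := (a0, false))) //.
- by apply: payoff_le1; apply: pol_policy.
- by rewrite inE /= a0L.
- by move=> [b' c']; rewrite inE /= inE andbF.
Qed.

End Pol.

Lemma card_copy (A : finType) (c : bool) (T : {set A}) :
  #|[set x : A * bool | (x.2 == c) && (x.1 \in T)]| = #|T|.
Proof.
have -> : [set x : A * bool | (x.2 == c) && (x.1 \in T)] = [set (a, c) | a in T].
  apply/setP => -[a c']; rewrite inE /=; apply/idP/imsetP.
    by move=> /andP[/eqP -> aT]; exists a.
  by move=> [a' a'T [-> ->]]; rewrite eqxx a'T.
by rewrite card_imset // => a b [].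
Qed.

Lemma card_copyU (A : finType) (c : bool) (T1 T2 : {set A}) :
  #|[set x : A * bool | (x.2 == c) && (x.1 \in T1)] :|:
    [set x : A * bool | (x.2 == ~~ c) && (x.1 \in T2)]| = (#|T1| + #|T2|)%N.
Proof.
rewrite cardsU !card_copy.
have -> : [set x : A * bool | (x.2 == c) && (x.1 \in T1)] :&:
    [set x : A * bool | (x.2 == ~~ c) && (x.1 \in T2)] = finset.set0.
  apply/setP => -[a c']; rewrite !inE /=.
  by case: c; case: c'; rewrite ?andbF.
by rewrite cards0 subn0.
Qed.

Lemma sumSb (R : realType) (S : finType) (f : S * bool -> R) :
  \sum_i f i = \sum_s (f (s, true) + f (s, false)).
Proof.
rewrite [RHS](eq_bigr (fun s => \sum_c f (s, c))); last by move=> s _; rewrite big_bool.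
by rewrite pair_bigA; apply: eq_bigr => -[s c] _.
Qed.

Unset Implicit Arguments.

Theorem theorem5p3 (R : realType) (A S : finType) (P : S -> R)
  (P_ge0 : forall s, 0 <= P s) (P_sum1 : \sum_(s : S) P s = 1)
  (Cw Cl : S -> {set A}) :
  exists M : 'I_2 -> option A -> option A -> R,
    is_policy M /\ error P Cw Cl M <= error_bound P Cw Cl.
Proof.
pose U := fun i : S * bool => [set x : A * bool | (x.2 == i.2) && (x.1 \in Cl i.1)].
pose V := fun i : S * bool => [set x : A * bool | (x.2 == ~~ i.2) && (x.1 \in Cw i.1)].
pose Z := fun i => U i :|: V i.
have HUZ : forall i, U i \subset Z i by move=> i; apply: finset.subsetUl.
have p0 : forall i : S * bool, 0 <= P i.1 / 2 by move=> i; apply: divr_ge0.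
have [sq [allin' Hc]] := @comb R _ _ U Z HUZ _ [set: A * bool] (fun i => P i.1 / 2) erefl p0.
have allin : forall x, x \in sq by move=> x; apply: allin'; rewrite inE.
pose fi s0 c : R := (first_in sq (U (s0, c)) (Z (s0, c)))%:R.
pose c2 s0 : R := if (Cw s0 == finset.set0) && (Cl s0 == finset.set0) then 1/2 else fi s0 true.
pose c1 s0 : R := if (Cw s0 == finset.set0) && (Cl s0 == finset.set0) then 1/2 else fi s0 false.
exists (pol R sq); split; first exact: pol_policy.
have v1 : value1 P Cl Cw (pol R sq) <= \sum_s P s * c2 s.
  rewrite /value1.
  apply: (@supinf_le R _ (@is_strategy R A)
    (fun s1 s2 => exp_payoff P Cl Cw (pol R sq) ord0 s1 s2) _ (dstrat R (fun _ => None))).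
  - exact: dstratP.
  - by move=> a b ha hb; apply: exp_ge0 => //; apply: pol_policy.
  - move=> s1 hs1; exists (dstrat R (pickc sq false)); first exact: dstratP.
    apply: exp_le2 => // s0 a1; exact: G2bound.
have v2 : value2 P Cw Cl (pol R sq) <= \sum_s P s * c1 s.
  rewrite /value2.
  apply: (@supinf_le R _ (@is_strategy R A)
    (fun s2 s1 => exp_payoff P Cw Cl (pol R sq) ord_max s1 s2) _ (dstrat R (fun _ => None))).
  - exact: dstratP.
  - by move=> a b ha hb; apply: exp_ge0 => //; apply: pol_policy.
  - move=> s2 hs2; exists (dstrat R (pickc sq true)); first exact: dstratP.
    apply: exp_le1 => // s0 a2; exact: G1bound.
rewrite /error.
pose q s0 : R := #|Cl s0|%:R / (#|Cl s0| + #|Cw s0|)%:R.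
have Hc' : \sum_s (P s / 2 * fi s true + P s / 2 * fi s false) <=
           \sum_s (P s / 2 * q s + P s / 2 * q s).
  move: Hc; rewrite /Fv !sumSb /=.
  congr (_ <= _); apply: eq_bigr => s0 _ /=.
  by rewrite /q !finset.setIT /Z /U /V /= !card_copyU !card_copy.
have key : forall s0, P s0 * c2 s0 + P s0 * c1 s0 + 2 * (P s0 / 2 * q s0 + P s0 / 2 * q s0)
   <= 2 * (P s0 * (if Cw s0 :|: Cl s0 != finset.set0
     then #|Cl s0|%:R / (#|Cw s0| + #|Cl s0|)%:R
     else 1 / 2)) + 2 * (P s0 / 2 * fi s0 true + P s0 / 2 * fi s0 false).
  move=> s0; rewrite /c2 /c1 finset.setU_eq0.
  have hP := P_ge0 s0.
  have hft : 0 <= fi s0 true by apply: ler0n.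
  have hff : 0 <= fi s0 false by apply: ler0n.
  case: ifP => [/andP[/eqP W0 /eqP L0]|_] /=.
    have -> : q s0 = 0 by rewrite /q L0 cards0 mul0r.
    have h1 : 0 <= P s0 * fi s0 true by apply: mulr_ge0.
    have h2 : 0 <= P s0 * fi s0 false by apply: mulr_ge0.
    nra.
  have -> : #|Cl s0|%:R / (#|Cw s0| + #|Cl s0|)%:R = q s0 by rewrite /q addnC.
  nra.
have Hs := @ler_sum _ _ (index_enum S) (fun _ => true) _ _ (fun s0 _ => key s0).
rewrite !big_split /= -!mulr_sumr in Hs.
rewrite /error_bound.
have := lerD v1 v2.
rewrite -big_split /=.
move: Hs Hc'; rewrite !big_split /=.
lra.
Qed.
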